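(* Fix a prime $p$. Let $E/\mathbb{Q}$ be an elliptic curve with a fixed Weierstrass model (integral coefficients) and let $P\in E(\mathbb{Q})$, $P\neq O$. Write $P=(a/d^2,b/d^3)$ and, for $n\ge1$, $u_n=\frac{d^{n^2}f_n(P)}{d_n}$, where $f_n$ is the $n$-th division polynomial and $d_n=d(nP)$. Then $$P\in E^0(\mathbb{Q}_p)\iff u_2\in\mathbb{Z}_p^\times.$$ In particular, $C_E(P)=\min\{n: |u_2(nP)|=1\}$.
   Context: A point $R\ne O$ of $E(\mathbb{Q})$ is written uniquely as $R=(a/d^2,b/d^3)$ with $a,b,d\in\mathbb{Z}$, $d>0$, $\gcd(a,d)=\gcd(b,d)=1$, and $d(R)=d$. $E^0(\mathbb{Q}_p)$ is the set of points of $E(\mathbb{Q}_p)$ with non-singular reduction mod $p$; $E^0(\mathbb{Q})$ is the set of points of $E(\mathbb{Q})$ with non-singular reduction at every prime; $C_E(P)=\min\{n\ge1: nP\in E^0(\mathbb{Q})\}$. The division polynomial $f_n$ is the one relative to the invariant differential, with $f_2=2y+a_1x+a_3$; $u_2(nP)$ denotes the quantity $u_2$ computed for the point $nP$, and $|\cdot|$ is the ordinary absolute value on $\mathbb{Q}$. *)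

(* Defs.v *)
From HB Require Import structures.
From mathcomp Require Import all_boot all_order all_algebra.
Set Implicit Arguments. Unset Strict Implicit. Unset Printing Implicit Defensive.
Import Order.TTheory GRing.Theory Num.Theory.
Local Open Scope ring_scope.

(* A Weierstrass model with integral coefficients
   y^2 + a1 x y + a3 y = x^3 + a2 x^2 + a4 x + a6. *)
Record wcurve := WCurve { a1 : int; a2 : int; a3 : int; a4 : int; a6 : int }.

Definition disc (E : wcurve) : int :=
  let b2 := a1 E ^+ 2 + 4 * a2 E in
  let b4 := 2 * a4 E + a1 E * a3 E in
  let b6 := a3 E ^+ 2 + 4 * a6 E in
  let b8 := a1 E ^+ 2 * a6 E + 4 * a2 E * a6 E - a1 E * a3 E * a4 E
            + a2 E * a3 E ^+ 2 - a4 E ^+ 2 in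
  - b2 ^+ 2 * b8 - 8 * b4 ^+ 3 - 27 * b6 ^+ 2 + 9 * b2 * b4 * b6.

(* Rational points: None is the point at infinity O. *)
Definition point := option (rat * rat).

Definition cq (z : int) : rat := z%:~R.

Definition on_curve (E : wcurve) (R : point) : bool :=
  match R with
  | None => true
  | Some (x, y) => y ^+ 2 + cq (a1 E) * x * y + cq (a3 E) * y ==
                   x ^+ 3 + cq (a2 E) * x ^+ 2 + cq (a4 E) * x + cq (a6 E)
  end.

(* Partial derivatives of F = y^2 + a1xy + a3y - x^3 - a2x^2 - a4x - a6. *)
Definition Fy (E : wcurve) (x y : rat) : rat := 2 * y + cq (a1 E) * x + cq (a3 E).
Definition Fx (E : wcurve) (x y : rat) : rat :=
  cq (a1 E) * y - 3 * x ^+ 2 - 2 * cq (a2 E) * x - cq (a4 E).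

Definition addpt (E : wcurve) (P Q : point) : point :=
  match P, Q with
  | None, _ => Q
  | _, None => P
  | Some (x1, y1), Some (x2, y2) =>
    if (x1 == x2) && (y1 + y2 + cq (a1 E) * x2 + cq (a3 E) == 0) then None
    else
      let l := if x1 == x2 then
                 (3 * x1 ^+ 2 + 2 * cq (a2 E) * x1 + cq (a4 E) - cq (a1 E) * y1)
                   / (2 * y1 + cq (a1 E) * x1 + cq (a3 E))
               else (y2 - y1) / (x2 - x1) in
      let nu := y1 - l * x1 in
      let x3 := l ^+ 2 + cq (a1 E) * l - cq (a2 E) - x1 - x2 in
      Some (x3, - (l + cq (a1 E)) * x3 - nu - cq (a3 E))
  end.

Definition mulpt (E : wcurve) (n : nat) (P : point) : point :=
  iter n (addpt E P) None.

Definition isqrt (n : nat) : nat := (\max_(k < n.+1 | k * k <= n) k)%N.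

(* d(R): R = (a/d^2, b/d^3) in lowest terms, d > 0, so d^2 = denominator of x.
   Convention d(O) = 1 (never used in the theorem, where 2P <> O). *)
Definition dpt (R : point) : nat :=
  match R with
  | None => 1%N
  | Some (x, _) => isqrt `|denq x|%N
  end.

(* Second division polynomial f_2 = 2y + a1 x + a3 (0 at O by convention). *)
Definition f2 (E : wcurve) (R : point) : rat :=
  match R with None => 0 | Some (x, y) => Fy E x y end.

Definition u2 (E : wcurve) (R : point) : rat :=
  (dpt R)%:R ^+ 4 * f2 E R / (dpt (addpt E R R))%:R.

Definition p_integral (p : nat) (r : rat) : bool := ~~ (p %| `|denq r|)%N.
Definition p_unit (p : nat) (r : rat) : bool :=
  ~~ (p %| `|numq r|)%N && ~~ (p %| `|denq r|)%N.
(* for p-integral r : r is 0 mod p *)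
Definition p_zero (p : nat) (r : rat) : bool := (p %| `|numq r|)%N.

(* R in E^0(Q_p): the reduction mod p of R (w.r.t. the fixed model) is a
   non-singular point.  A point which is not p-integral reduces to O. *)
Definition in_E0p (E : wcurve) (p : nat) (R : point) : bool :=
  match R with
  | None => true
  | Some (x, y) =>
    ~~ (p_integral p x && p_integral p y)
    || ~~ (p_zero p (Fx E x y) && p_zero p (Fy E x y))
  end.

Definition in_E0 (E : wcurve) (R : point) : Prop :=
  forall q : nat, prime q -> in_E0p E q R.

Definition least_pos (P : nat -> Prop) (m : nat) : Prop :=
  (0 < m)%N /\ P m /\ forall n, (0 < n)%N -> P n -> (m <= n)%N.

(* Main.v *)
Require Import Defs.
From mathcomp Require Import all_boot all_order all_algebra.
Import Order.TTheory GRing.Theory Num.Theory.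
Local Open Scope ring_scope.
From mathcomp Require Import ring lra zify.
Set Implicit Arguments. Unset Strict Implicit. Unset Printing Implicit Defensive.

Definition Cq (E : wcurve) (x y : rat) : rat :=
  y ^+ 2 + cq (a1 E) * x * y + cq (a3 E) * y -
  (x ^+ 3 + cq (a2 E) * x ^+ 2 + cq (a4 E) * x + cq (a6 E)).

Lemma onE E x y : on_curve E (Some (x, y)) = (Cq E x y == 0).
Proof. by rewrite /= /Cq subr_eq0. Qed.

Definition negpt (E : wcurve) (R : point) : point :=
  match R with None => None | Some (x, y) => Some (x, - y - cq (a1 E) * x - cq (a3 E)) end.

Lemma Cq_refl E x y : Cq E x (- y - cq (a1 E) * x - cq (a3 E)) = Cq E x y.
Proof. rewrite /Cq; ring. Qed.

Lemma tang_id E x1 l nu :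
  let x3 := l ^+ 2 + cq (a1 E) * l - cq (a2 E) - x1 - x1 in
  Cq E x3 (l * x3 + nu) = Cq E x1 (l * x1 + nu) +
     (Fx E x1 (l * x1 + nu) + l * Fy E x1 (l * x1 + nu)) * (x3 - x1).
Proof. rewrite /Cq /Fx /Fy /=; ring. Qed.

Lemma chord_id E x1 x2 l nu : x1 != x2 ->
  let x3 := l ^+ 2 + cq (a1 E) * l - cq (a2 E) - x1 - x2 in
  Cq E x3 (l * x3 + nu) = Cq E x1 (l * x1 + nu) * (x3 - x2) / (x1 - x2)
     + Cq E x2 (l * x2 + nu) * (x3 - x1) / (x2 - x1).
Proof.
move=> h x3; rewrite /x3 /Cq.
have h1 : x1 - x2 != 0 by rewrite subr_eq0.
have h2 : x2 - x1 != 0 by rewrite subr_eq0 eq_sym.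
field. by rewrite h1 h2.
Qed.

Lemma chord_der E x1 x2 l nu :
  let x3 := l ^+ 2 + cq (a1 E) * l - cq (a2 E) - x1 - x2 in
  (x1 - x2) * (Fx E x2 (l * x2 + nu) + l * Fy E x2 (l * x2 + nu)) =
  (Cq E x1 (l * x1 + nu) - Cq E x2 (l * x2 + nu)) + (x1 - x2) * (x2 - x1) * (x3 - x2).
Proof. rewrite /Cq /Fx /Fy /=; ring. Qed.

Lemma same_x E x y1 y2 : Cq E x y1 = 0 -> Cq E x y2 = 0 ->
  y2 = y1 \/ y1 + y2 + cq (a1 E) * x + cq (a3 E) = 0.
Proof.
move=> h1 h2.
have : (y2 - y1) * (y1 + y2 + cq (a1 E) * x + cq (a3 E)) = 0.
  rewrite -[RHS](subr0 0) -{1}h2 -h1 /Cq; ring.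
by move/eqP; rewrite mulf_eq0 subr_eq0 => /orP [/eqP|/eqP]; [left|right].
Qed.
Lemma refl_rw E l x1 y1 x3 : - (l + cq (a1 E)) * x3 - (y1 - l * x1) - cq (a3 E) =
     - (l * x3 + (y1 - l * x1)) - cq (a1 E) * x3 - cq (a3 E).
Proof. ring. Qed.

Lemma on_add E P Q : on_curve E P -> on_curve E Q -> on_curve E (addpt E P Q).
Proof.
case: P => [[x1 y1]|] // hP; case: Q => [[x2 y2]|] // hQ.
rewrite /addpt; case: ifP => // hc.
move: hP hQ; rewrite !onE => /eqP hP /eqP hQ.
case: (eqVneq x1 x2) => [ex|nx].
- subst x2.
  have hy : y2 = y1.
    case: (same_x hP hQ) => // h; move: hc; by rewrite eqxx h eqxx.
  subst y2.
  have hF : Fy E x1 y1 != 0.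
    move: hc; rewrite eqxx /= /Fy => /negbT; apply: contra => /eqP h.
    apply/eqP; rewrite -h; ring.
  apply/eqP. set l := _ / _.
  rewrite refl_rw Cq_refl tang_id.
  have -> : l * x1 + (y1 - l * x1) = y1 by ring.
  rewrite hP add0r.
  have -> : Fx E x1 y1 + l * Fy E x1 y1 = 0.
    rewrite /l; move: hF; rewrite /Fx /Fy => hF; field; done.
  by rewrite mul0r.
- apply/eqP. set l := _ / _.
  rewrite refl_rw Cq_refl (chord_id _ _ _ nx).
  have -> : l * x1 + (y1 - l * x1) = y1 by ring.
  have -> : l * x2 + (y1 - l * x1) = y2.
    rewrite /l; have h2 : x2 - x1 != 0 by rewrite subr_eq0 eq_sym.
    field; done.
  by rewrite hP hQ !mul0r add0r.
Qed.
Lemma add_comm E P Q : on_curve E P -> on_curve E Q -> addpt E P Q = addpt E Q P.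
Proof.
case: P => [[x1 y1]|] // hP; case: Q => [[x2 y2]|] // hQ.
move: hP hQ; rewrite !onE => /eqP hP /eqP hQ.
case: (eqVneq x1 x2) => [ex|nx].
- subst x2.
  case: (same_x hP hQ) => h.
  + by subst y2.
  + have h' : y2 + y1 + cq (a1 E) * x1 + cq (a3 E) = 0 by rewrite -h; ring.
    by rewrite /= eqxx h h' eqxx.
- have nx' : x2 != x1 by rewrite eq_sym.
  rewrite /= (negbTE nx) (negbTE nx') /=.
  have h1 : x1 - x2 != 0 by rewrite subr_eq0.
  have h2 : x2 - x1 != 0 by rewrite subr_eq0 eq_sym.
  congr (Some (_, _)); field; by rewrite h1 h2.
Qed.

Lemma neg_add E P Q : on_curve E P -> on_curve E Q ->
  negpt E (addpt E P Q) = addpt E (negpt E P) (negpt E Q).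
Proof.
case: P => [[x1 y1]|] // hP; case: Q => [[x2 y2]|] // hQ.
move: hP hQ; rewrite !onE => /eqP hP /eqP hQ.
case: (eqVneq x1 x2) => [ex|nx].
- subst x2.
  case: (same_x hP hQ) => h.
  + subst y2.
    case: (eqVneq (Fy E x1 y1) 0) => hF.
    * have e1 : y1 + y1 + cq (a1 E) * x1 + cq (a3 E) = 0 by rewrite -hF /Fy; ring.
      have e2 : (- y1 - cq (a1 E) * x1 - cq (a3 E)) + (- y1 - cq (a1 E) * x1 - cq (a3 E)) + cq (a1 E) * x1 + cq (a3 E) = 0.
        by rewrite -oppr0 -e1; ring.
      by rewrite /= eqxx e1 e2 eqxx.
    * have e1 : y1 + y1 + cq (a1 E) * x1 + cq (a3 E) != 0 by move: hF; rewrite /Fy; congr (_ != _); ring.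
      have e2 : (- y1 - cq (a1 E) * x1 - cq (a3 E)) + (- y1 - cq (a1 E) * x1 - cq (a3 E)) + cq (a1 E) * x1 + cq (a3 E) != 0.
        move: hF; rewrite /Fy -oppr_eq0; congr (_ != _); ring.
      rewrite /= eqxx (negbTE e1) (negbTE e2) /=.
      have e3 : - y1 - cq (a1 E) * x1 - cq (a3 E) + - y1 - cq (a1 E) * x1 - cq (a3 E) + cq (a1 E) * x1 + cq (a3 E) != 0.
        move: hF; rewrite /Fy -oppr_eq0; congr (_ != _); ring.
      move: hF; rewrite /Fy => hF.
      have e4 : 2 * (- y1 - cq (a1 E) * x1 - cq (a3 E)) + cq (a1 E) * x1 + cq (a3 E) != 0.
        move: hF; rewrite -oppr_eq0; congr (_ != _); ring.
      congr (Some (_, _)); field; rewrite ?hF ?e4 //.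
  + have e2 : (- y1 - cq (a1 E) * x1 - cq (a3 E)) + (- y2 - cq (a1 E) * x1 - cq (a3 E)) + cq (a1 E) * x1 + cq (a3 E) = 0.
      by rewrite -oppr0 -h; ring.
    by rewrite /= eqxx h e2 eqxx.
- rewrite /= (negbTE nx) /=.
  have h1 : x1 - x2 != 0 by rewrite subr_eq0.
  have h2 : x2 - x1 != 0 by rewrite subr_eq0 eq_sym.
  congr (Some (_, _)); field; by rewrite ?h1 ?h2.
Qed.
Definition NS (E : wcurve) := forall x y, Cq E x y = 0 -> Fx E x y = 0 -> Fy E x y = 0 -> False.

Lemma cancel_core E x1 y1 x2 y2 l : NS E -> Cq E x1 y1 = 0 -> Cq E x2 y2 = 0 ->
  y2 = l * x2 + (y1 - l * x1) -> (x1 = x2 -> Fx E x1 y1 + l * Fy E x1 y1 = 0) ->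
  addpt E (Some (l ^+ 2 + cq (a1 E) * l - cq (a2 E) - x1 - x2,
      - (l + cq (a1 E)) * (l ^+ 2 + cq (a1 E) * l - cq (a2 E) - x1 - x2) - (y1 - l * x1) - cq (a3 E)))
    (negpt E (Some (x2, y2))) = Some (x1, y1).
Proof.
move=> hN hP hQ hy ht.
have key : l ^+ 2 + cq (a1 E) * l - cq (a2 E) - x1 - x2 = x2 ->
    Fy E x2 y2 != 0 /\ Fx E x2 y2 + l * Fy E x2 y2 = 0.
  move=> e.
  have hd : Fx E x2 y2 + l * Fy E x2 y2 = 0.
    case: (eqVneq x1 x2) => [e12|n12].
    - subst x2. have ey : y2 = y1 by rewrite hy; ring.
      subst y2; rewrite ey; exact: ht.
    - have := chord_der E x1 x2 l (y1 - l * x1); rewrite /= e subrr mulr0 addr0.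
      have -> : l * x1 + (y1 - l * x1) = y1 by ring.
      rewrite -hy hP hQ subrr => /eqP; rewrite mulf_eq0 subr_eq0 (negbTE n12) /=.
      by move/eqP.
  split; last done.
  apply/negP => /eqP hF; apply: (hN x2 y2) => //.
  by move: hd; rewrite hF mulr0 addr0.
rewrite /=.
set x3 := l ^+ 2 + cq (a1 E) * l - cq (a2 E) - x1 - x2.
set nu := y1 - l * x1.
set y3 := - (l + cq (a1 E)) * x3 - nu - cq (a3 E).
have hc : (x3 == x2) && (y3 + (- y2 - cq (a1 E) * x2 - cq (a3 E)) + cq (a1 E) * x2 + cq (a3 E) == 0) = false.
  case: (eqVneq x3 x2) => // e /=.
  have [hF _] := key e.
  apply/negbTE; move: hF; rewrite -oppr_eq0; congr (_ != _).
  rewrite /y3 e hy /Fy /nu; ring.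
rewrite hc.
set l' := if x3 == x2 then _ else _.
have hl : l' = - (l + cq (a1 E)).
  rewrite /l'; case: (eqVneq x3 x2) => e.
  - have [hF hd] := key e.
    have el : l = - Fx E x2 y2 / Fy E x2 y2.
      by apply: (mulIf hF); rewrite divfK //; apply/eqP; rewrite -subr_eq0 opprK addrC hd.
    have ey3 : y3 = - y2 - cq (a1 E) * x2 - cq (a3 E) by rewrite /y3 e hy /nu; ring.
    rewrite ey3 e el; move: hF; rewrite /Fy /Fx => hF.
    have hF' : 2 * (- y2 - cq (a1 E) * x2 - cq (a3 E)) + cq (a1 E) * x2 + cq (a3 E) != 0.
      move: hF; rewrite -oppr_eq0; congr (_ != _); ring.
    field; by rewrite hF hF'.
  - have h2 : x2 - x3 != 0 by rewrite subr_eq0 eq_sym.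
    rewrite hy /y3 /nu; field; by rewrite h2.
rewrite hl; congr (Some (_, _)); rewrite /y3 /x3 /nu; ring.
Qed.
Lemma add_cancel E A B : NS E -> on_curve E A -> on_curve E B ->
  addpt E (addpt E A B) (negpt E B) = A.
Proof.
move=> hN.
case: A => [[x1 y1]|] hA; case: B => [[x2 y2]|] hB //.
- move: hA hB; rewrite !onE => /eqP hP /eqP hQ.
  rewrite [addpt E (Some _) (Some _)]/=.
  case: ifP => hc.
  + case/andP: hc => /eqP e /eqP s; subst x2.
    rewrite /=; congr (Some (_, _)).
    by rewrite -[y1]subr0 -s; ring.
  + case: (eqVneq x1 x2) => [e|ne].
    * subst x2. rewrite ?eqxx.
      have hy : y2 = y1.
        case: (same_x hP hQ) => // h; move: hc; by rewrite eqxx h eqxx.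
      subst y2.
      have hF : Fy E x1 y1 != 0.
        move: hc; rewrite eqxx /= /Fy => /negbT; apply: contra => /eqP h.
        apply/eqP; rewrite -h; ring.
      apply: cancel_core => //; first by ring.
      move=> _; move: hF; rewrite /Fx /Fy => hF; field; done.
    * rewrite ?(negbTE ne).
      apply: cancel_core => //.
        have h2 : x2 - x1 != 0 by rewrite subr_eq0 eq_sym.
        field; done.
      by move=> e; rewrite e eqxx in ne.
- rewrite /= eqxx /=.
  rewrite (_ : _ + _ = 0) ?eqxx //. ring.
Qed.
Definition discq (a1 a2 a3 a4 a6 : rat) : rat :=
  let b2 := a1 ^+ 2 + 4 * a2 in
  let b4 := 2 * a4 + a1 * a3 in
  let b6 := a3 ^+ 2 + 4 * a6 in
  let b8 := a1 ^+ 2 * a6 + 4 * a2 * a6 - a1 * a3 * a4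
            + a2 * a3 ^+ 2 - a4 ^+ 2 in
  - b2 ^+ 2 * b8 - 8 * b4 ^+ 3 - 27 * b6 ^+ 2 + 9 * b2 * b4 * b6.

Lemma cq_disc E : cq (disc E) = discq (cq (a1 E)) (cq (a2 E)) (cq (a3 E)) (cq (a4 E)) (cq (a6 E)).
Proof.
rewrite /cq /disc /discq /=.
rewrite !(rmorphD, rmorphB, rmorphN, rmorphM, rmorphXn) /=.
done.
Qed.

Lemma disc_trans A1 A2 A3 A4 A6 r t :
  discq A1 A2 A3 A4 A6 =
  discq A1 (A2 + 3 * r) (2 * t + A1 * r + A3)
    (- (A1 * t - 3 * r ^+ 2 - 2 * A2 * r - A4))
    (- (t ^+ 2 + A1 * r * t + A3 * t - (r ^+ 3 + A2 * r ^+ 2 + A4 * r + A6))).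
Proof. rewrite /discq /=; ring. Qed.

Lemma NS_of_disc E : disc E != 0 -> NS E.
Proof.
move=> hd x y hC hx hy.
have : cq (disc E) = 0.
  rewrite cq_disc (disc_trans _ _ _ _ _ x y).
  move: hC hx hy; rewrite /Cq /Fx /Fy => -> -> ->.
  rewrite /discq /=; ring.
move/eqP; rewrite /cq intr_eq0 => h. by rewrite h in hd.
Qed.
Lemma on_neg E R : on_curve E R -> on_curve E (negpt E R).
Proof. case: R => [[x y]|] //; by rewrite /negpt !onE Cq_refl. Qed.

Lemma neg_neg E R : negpt E (negpt E R) = R.
Proof. case: R => [[x y]|] //=; congr (Some (_, _)); ring. Qed.

Lemma cancel2 E B Z : NS E -> on_curve E B -> on_curve E Z ->
  addpt E B (addpt E (negpt E B) Z) = Z.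
Proof.
move=> hN hB hZ.
have := add_cancel hN hZ (on_neg hB); rewrite neg_neg.
rewrite (add_comm hZ (on_neg hB)) => h.
by rewrite add_comm // on_add // on_neg.
Qed.

Lemma mulS E n P : mulpt E n.+1 P = addpt E P (mulpt E n P).
Proof. by rewrite /mulpt iterS. Qed.

Lemma on_mul E n P : on_curve E P -> on_curve E (mulpt E n P).
Proof. move=> hP; elim: n => [|n IH] //; by rewrite mulS on_add. Qed.

Lemma double_ne E P n : NS E -> on_curve E P ->
  (forall n : nat, (0 < n)%N -> mulpt E n P <> None) -> (0 < n)%N ->
  addpt E (mulpt E n P) (mulpt E n P) <> None.
Proof.
move=> hN hP hT hn hD.
have hneg : negpt E (mulpt E n P) = mulpt E n P.
  move: hD; case: (mulpt E n P) => [[x y]|] //=.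
  case: ifP => // /andP [_ /eqP h] _.
  congr (Some (_, _)); apply/eqP; rewrite -subr_eq0; apply/eqP.
  by rewrite -oppr0 -h; ring.
have claim : forall k, (k <= n)%N -> mulpt E (n + k) P = negpt E (mulpt E (n - k) P).
  elim=> [|k IH] hk; first by rewrite addn0 subn0 hneg.
  have hk' : (k <= n)%N by apply: ltnW.
  rewrite addnS mulS IH //.
  have -> : (n - k = (n - k.+1).+1)%N by rewrite subnSK.
  rewrite mulS neg_add // ?on_mul // cancel2 // on_neg // on_mul //.
have := claim n (leqnn n); rewrite subnn /=.
by apply: hT; rewrite addn_gt0 hn.
Qed.

Definition vq (p : nat) (r : rat) : int :=
  (logn p `|numq r|)%:Z - (logn p `|denq r|)%:Z.

Lemma vq_frac p (a b : int) : a != 0 -> b != 0 ->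
  vq p (a%:~R / b%:~R) = (logn p `|a|)%:Z - (logn p `|b|)%:Z.
Proof.
move=> ha hb; set r := a%:~R / b%:~R.
have hr : r != 0 by rewrite /r mulf_neq0 ?invr_eq0 ?intr_eq0.
have e : numq r * b = a * denq r.
  apply: (@intr_inj rat); rewrite !intrM numqE /r.
  have hb' : (b%:~R : rat) != 0 by rewrite intr_eq0.
  field; done.
have e' := congr1 (fun z : int => logn p `|z|%N) e; rewrite /= !abszM in e'.
have hn : (0 < `|numq r|)%N by rewrite absz_gt0 numq_eq0.
have hd : (0 < `|denq r|)%N by rewrite absz_gt0 denq_eq0.
have ha' : (0 < `|a|)%N by rewrite absz_gt0.
have hb' : (0 < `|b|)%N by rewrite absz_gt0.
rewrite !lognM // in e'.
rewrite /vq; lia.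
Qed.

Lemma vq_int p (z : int) : vq p z%:~R = (logn p `|z|)%:Z.
Proof. by rewrite /vq numq_int denq_int /= logn1 subr0. Qed.

Lemma vq_nat p (n : nat) : vq p n%:R = (logn p n)%:Z.
Proof. by rewrite pmulrn vq_int. Qed.

Lemma vq0 p : vq p 0 = 0.
Proof. by rewrite /vq /= logn0 logn1. Qed.

Lemma vqN p r : vq p (- r) = vq p r.
Proof. by rewrite /vq numqN denqN abszN. Qed.

Lemma ratE (r : rat) : r = (numq r)%:~R / (denq r)%:~R.
Proof. by rewrite divq_num_den. Qed.

Lemma vqE p r : r != 0 -> vq p r = (logn p `|numq r|)%:Z - (logn p `|denq r|)%:Z.
Proof. by []. Qed.

Lemma vqM p x y : x != 0 -> y != 0 -> vq p (x * y) = vq p x + vq p y.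
Proof.
move=> hx hy.
have e : x * y = (numq x * numq y)%:~R / (denq x * denq y)%:~R.
  rewrite !intrM {1}(ratE x) {1}(ratE y).
  have h1 : ((denq x)%:~R : rat) != 0 by rewrite intr_eq0 denq_eq0.
  have h2 : ((denq y)%:~R : rat) != 0 by rewrite intr_eq0 denq_eq0.
  field; by rewrite h1 h2.
have nx : numq x != 0 by rewrite numq_eq0.
have ny : numq y != 0 by rewrite numq_eq0.
rewrite e vq_frac ?mulf_neq0 ?denq_eq0 // !abszM !lognM ?absz_gt0 ?denq_eq0 //.
rewrite /vq; lia.
Qed.

Lemma vqV p x : vq p (x^-1) = - vq p x.
Proof.
case: (eqVneq x 0) => [->|hx]; first by rewrite invr0 vq0 oppr0.
have nx : numq x != 0 by rewrite numq_eq0.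
have e : x^-1 = (denq x)%:~R / (numq x)%:~R.
  rewrite {1}(ratE x).
  have h1 : ((denq x)%:~R : rat) != 0 by rewrite intr_eq0 denq_eq0.
  have h2 : ((numq x)%:~R : rat) != 0 by rewrite intr_eq0.
  field; by rewrite h1 h2.
rewrite e vq_frac ?denq_eq0 // /vq; lia.
Qed.

Lemma vq_div p x y : x != 0 -> y != 0 -> vq p (x / y) = vq p x - vq p y.
Proof. by move=> hx hy; rewrite vqM ?invr_eq0 // vqV. Qed.

Lemma vqX p x n : x != 0 -> vq p (x ^+ n) = (n%:Z * vq p x).
Proof.
move=> hx; elim: n => [|n IH]; first by rewrite expr0 (vq_int p 1) /= logn1 mul0r.
rewrite exprS vqM ?expf_neq0 // IH; lia.
Qed.

Lemma vq_addge p x y (k : int) : prime p -> x != 0 -> y != 0 -> x + y != 0 ->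
  k <= vq p x -> k <= vq p y -> k <= vq p (x + y).
Proof.
move=> pp hx hy hs kx ky.
set s := numq x * denq y + numq y * denq x.
have dx0 : denq x != 0 by rewrite denq_eq0.
have dy0 : denq y != 0 by rewrite denq_eq0.
have e : x + y = s%:~R / (denq x * denq y)%:~R.
  rewrite /s !intrD !intrM {1}(ratE x) {1}(ratE y).
  have h1 : ((denq x)%:~R : rat) != 0 by rewrite intr_eq0.
  have h2 : ((denq y)%:~R : rat) != 0 by rewrite intr_eq0.
  field; by rewrite h1 h2.
have s0 : s != 0.
  apply: contraNneq hs => hs0; by rewrite e hs0 mul0r.
have nx : numq x != 0 by rewrite numq_eq0.
have ny : numq y != 0 by rewrite numq_eq0.
rewrite e vq_frac ?mulf_neq0 // abszM lognM ?absz_gt0 //.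
move: kx ky; rewrite /vq => kx ky.
set m : int := k + (logn p `|denq x|)%:Z + (logn p `|denq y|)%:Z.
case: (lerP m 0) => hm; first by lia.
have [mn hmn] : exists mn : nat, m = mn%:Z by exists `|m|%N; rewrite gez0_abs // ltW.
suff : (mn <= logn p `|s|)%N by lia.
rewrite -pfactor_dvdn ?absz_gt0 //.
have -> : (p ^ mn)%N = `|(p ^ mn)%N%:Z|%N by [].
rewrite -dvdzE /s; apply: rpredD.
- rewrite dvdzE /= pfactor_dvdn ?abszM ?lognM ?absz_gt0 //; lia.
- rewrite dvdzE /= pfactor_dvdn ?abszM ?lognM ?absz_gt0 //; lia.
Qed.

Definition vge (p : nat) (r : rat) (k : int) : bool := (r == 0) || (k <= vq p r).

Lemma vge0 p k : vge p 0 k.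
Proof. by rewrite /vge eqxx. Qed.

Lemma vgeP p r k : r != 0 -> vge p r k = (k <= vq p r).
Proof. by move=> h; rewrite /vge (negbTE h). Qed.

Lemma vge_weak p r k k' : k' <= k -> vge p r k -> vge p r k'.
Proof. rewrite /vge => hk /orP [->|h] //; by rewrite (le_trans hk h) orbT. Qed.

Lemma vgeD' p x y k1 k2 k : prime p -> vge p x k1 -> vge p y k2 -> k <= k1 -> k <= k2 ->
  vge p (x + y) k.
Proof.
move=> pp hx hy h1 h2.
case: (eqVneq x 0) => [->|x0]; first by rewrite add0r; apply: vge_weak hy.
case: (eqVneq y 0) => [->|y0]; first by rewrite addr0; apply: vge_weak hx.
case: (eqVneq (x + y) 0) => [->|s0]; first exact: vge0.
rewrite vgeP // vq_addge //.
- by move: hx; rewrite vgeP // => /(le_trans h1).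
- by move: hy; rewrite vgeP // => /(le_trans h2).
Qed.

Lemma vgeN p x k : vge p x k -> vge p (- x) k.
Proof. by rewrite /vge oppr_eq0 vqN. Qed.

Lemma vgeM' p x y k1 k2 k : vge p x k1 -> vge p y k2 -> k <= k1 + k2 -> vge p (x * y) k.
Proof.
case: (eqVneq x 0) => [->|x0]; first by rewrite mul0r vge0.
case: (eqVneq y 0) => [->|y0]; first by rewrite mulr0 vge0.
rewrite !vgeP ?mulf_neq0 // vqM // => h1 h2 h; lia.
Qed.

Lemma vgeX' p x n k1 k : vge p x k1 -> k <= n%:Z * k1 -> vge p (x ^+ n) k.
Proof.
case: (eqVneq x 0) => [->|x0].
  case: n => [|n] _ hk; last by rewrite expr0n vge0.
  by rewrite expr0 /vge (vq_int p 1) /= logn1; move: hk; rewrite mul0r.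
move=> h1 h; rewrite vgeP ?expf_neq0 // vqX //; move: h1; rewrite vgeP // => h1.
apply: (le_trans h); by rewrite ler_wpM2l.
Qed.

Lemma vge_cq p z : vge p (cq z) 0.
Proof. by rewrite /vge /cq vq_int orbT. Qed.

Lemma vge_nat p n : vge p (n%:R) 0.
Proof. by rewrite /vge vq_nat orbT. Qed.

Lemma dominant p x y : prime p -> x != 0 -> vge p y (vq p x + 1) ->
  x + y != 0 /\ vq p (x + y) = vq p x.
Proof.
move=> pp x0 hy.
case: (eqVneq y 0) => [->|y0]; first by rewrite addr0.
move: hy; rewrite vgeP // => hy.
have s0 : x + y != 0.
  apply/negP => /eqP e. have ey : y = - x by apply/eqP; rewrite -addr_eq0 addrC e.
  by move: hy; rewrite ey vqN; lia.
split=> //.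
have h1 : vq p x <= vq p (x + y) by apply: vq_addge => //; lia.
have h2 : vq p (x + y) <= vq p x.
  case: (lerP (vq p (x + y)) (vq p x)) => // h.
  have : vq p x + 1 <= vq p ((x + y) + - y).
    apply: vq_addge => //; rewrite ?oppr_eq0 ?vqN //; try lia.
    by rewrite addrK.
  rewrite addrK; lia.
lia.
Qed.

Lemma vgeD p x y k : prime p -> vge p x k -> vge p y k -> vge p (x + y) k.
Proof. move=> pp hx hy; exact: (vgeD' pp hx hy). Qed.

Lemma vgeM p x y k1 k2 : vge p x k1 -> vge p y k2 -> vge p (x * y) (k1 + k2).
Proof. move=> h1 h2; exact: (vgeM' h1 h2). Qed.

Lemma vgeX p x n k1 : vge p x k1 -> vge p (x ^+ n) (n%:Z * k1).
Proof. move=> h1; exact: (vgeX' h1). Qed.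

Ltac vleaf := match goal with
 | |- is_true (vge _ (cq _) _) => eapply vge_cq
 | |- is_true (vge _ (_%:R) _) => eapply vge_nat
 | |- is_true (vge _ 1 _) => eapply (vge_nat _ 1)
 | |- _ => eassumption end.
Ltac vstep := match goal with
 | |- is_true (prime _) => eassumption
 | |- is_true (vge _ (_ + _) _) => eapply vgeD
 | |- is_true (vge _ (- _) _) => eapply vgeN
 | |- is_true (vge _ (_ * _) ?k) => tryif is_evar k then eapply vgeM else eapply vgeM'
 | |- is_true (vge _ (_ ^+ _) ?k) => tryif is_evar k then eapply vgeX else eapply vgeX'
 | |- is_true (vge _ _ ?k) => tryif is_evar k then vleaf else (eapply vge_weak; [ | vleaf ])
 end.
Ltac vsolve := repeat (progress (try vstep)).

Lemma logn0_or p r : prime p ->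
  logn p `|numq r| = 0%N \/ logn p `|denq r| = 0%N.
Proof.
move=> pp; case: (posnP (logn p `|numq r|)) => [->|hn]; first by left.
case: (posnP (logn p `|denq r|)) => [->|hd]; first by right.
exfalso.
move: hn hd; rewrite !logn_gt0 !mem_primes => /and3P [_ _ h1] /and3P [_ _ h2].
have : (p %| gcdn `|numq r| `|denq r|)%N by rewrite dvdn_gcd h1 h2.
rewrite (eqP (coprime_num_den r)) dvdn1 => /eqP e.
by rewrite e in pp.
Qed.

Lemma dvd_logn p m : prime p -> (0 < m)%N -> (p %| m)%N = (0 < logn p m)%N.
Proof. by move=> pp hm; rewrite logn_gt0 mem_primes pp hm. Qed.

Lemma p_unit_vq p r : prime p -> p_unit p r = (r != 0) && (vq p r == 0).
Proof.
move=> pp; rewrite /p_unit.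
case: (eqVneq r 0) => [->|r0]; first by rewrite /= dvdn0.
have hn : (0 < `|numq r|)%N by rewrite absz_gt0 numq_eq0.
have hd : (0 < `|denq r|)%N by rewrite absz_gt0 denq_eq0.
rewrite !dvd_logn // /vq /=.
case: (logn0_or r pp) => e; rewrite e /=.
- rewrite sub0r oppr_eq0. by case: (logn p `|denq r|).
- rewrite subr0. by case: (logn p `|numq r|).
Qed.

Lemma p_integral_vge p r : prime p -> p_integral p r = vge p r 0.
Proof.
move=> pp; rewrite /p_integral /vge.
case: (eqVneq r 0) => [->|r0] /=; first by rewrite dvdn1; case: p pp => [|[|]].
have hd : (0 < `|denq r|)%N by rewrite absz_gt0 denq_eq0.
rewrite dvd_logn // /vq.
case: (logn0_or r pp) => e; rewrite e /=.
- by case: (logn p `|denq r|).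
- by rewrite subr0.
Qed.

Lemma p_zero_vge p r : prime p -> vge p r 0 -> p_zero p r = vge p r 1.
Proof.
move=> pp; rewrite /p_zero /vge.
case: (eqVneq r 0) => [->|r0] /=; first by rewrite dvdn0.
have hn : (0 < `|numq r|)%N by rewrite absz_gt0 numq_eq0.
rewrite dvd_logn // /vq.
case: (logn0_or r pp) => e; rewrite e /=.
- move=> h. have hd : logn p `|denq r| = 0%N by lia. rewrite hd. by case: (logn p `|numq r|).
- rewrite subr0 => _. by case: (logn p `|numq r|).
Qed.

Lemma lden_neg p r : prime p -> vq p r < 0 -> (logn p `|denq r|)%:Z = - vq p r.
Proof.
move=> pp; rewrite /vq; case: (logn0_or r pp) => e; rewrite e; lia.
Qed.

Lemma lden_pos p r : prime p -> 0 <= vq p r -> logn p `|denq r| = 0%N.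
Proof.
move=> pp; rewrite /vq; case: (logn0_or r pp) => e; rewrite e //; lia.
Qed.

Lemma curve_eq E x y : Cq E x y = 0 ->
  y ^+ 2 + (cq (a1 E) * x * y + cq (a3 E) * y) =
  x ^+ 3 + (cq (a2 E) * x ^+ 2 + cq (a4 E) * x + cq (a6 E)).
Proof.
move=> h; apply/eqP; rewrite -subr_eq0; apply/eqP; rewrite -h /Cq; ring.
Qed.

Lemma curve_val1 p E x y : prime p -> Cq E x y = 0 -> x != 0 -> vq p x < 0 ->
  exists k : int, [/\ 0 < k, vq p x = -2 * k, vq p y = -3 * k & y != 0].
Proof.
move=> pp hC x0 vx.
have hx : vge p x (vq p x) by rewrite vgeP.
have x3 : x ^+ 3 != 0 by rewrite expf_neq0.
have [hR vR] : x ^+ 3 + (cq (a2 E) * x ^+ 2 + cq (a4 E) * x + cq (a6 E)) != 0 /\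
    vq p (x ^+ 3 + (cq (a2 E) * x ^+ 2 + cq (a4 E) * x + cq (a6 E))) = vq p (x ^+ 3).
  apply: dominant => //. rewrite vqX //.
  vsolve; lia.
rewrite vqX // in vR.
have eC := curve_eq hC.
have y0 : y != 0.
  apply/eqP => y00; move: hR; rewrite -eC y00 => /eqP; apply; ring.
have hy : vge p y (vq p y) by rewrite vgeP.
case: (ltP (vq p y) (vq p x)) => hyx.
- have y2 : y ^+ 2 != 0 by rewrite expf_neq0.
  have [hL vL] : y ^+ 2 + (cq (a1 E) * x * y + cq (a3 E) * y) != 0 /\
    vq p (y ^+ 2 + (cq (a1 E) * x * y + cq (a3 E) * y)) = vq p (y ^+ 2).
    apply: dominant => //. rewrite vqX //.
    vsolve; lia.
  rewrite eC vR vqX // in vL.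
  exists (vq p x - vq p y); split => //; lia.
- exfalso.
  have : vge p (y ^+ 2 + (cq (a1 E) * x * y + cq (a3 E) * y)) (3%:Z * vq p x + 1).
    vsolve; lia.
  rewrite eC vgeP // vR; lia.
Qed.

Lemma curve_val2 p E x y : prime p -> Cq E x y = 0 -> vge p x 0 -> vge p y 0.
Proof.
move=> pp hC hx0.
case: (eqVneq y 0) => [->|y0]; first exact: vge0.
rewrite vgeP //; case: (lerP 0 (vq p y)) => // hy0; exfalso.
have hy : vge p y (vq p y) by rewrite vgeP.
have eC := curve_eq hC.
have y2 : y ^+ 2 != 0 by rewrite expf_neq0.
have [hL vL] : y ^+ 2 + (cq (a1 E) * x * y + cq (a3 E) * y) != 0 /\
  vq p (y ^+ 2 + (cq (a1 E) * x * y + cq (a3 E) * y)) = vq p (y ^+ 2).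
  apply: dominant => //. rewrite vqX //.
  vsolve; lia.
have : vge p (x ^+ 3 + (cq (a2 E) * x ^+ 2 + cq (a4 E) * x + cq (a6 E))) 0.
  vsolve; lia.
rewrite -eC vgeP // vL vqX //; lia.
Qed.
Lemma isqrt_sq d : isqrt (d * d) = d.
Proof.
apply/eqP; rewrite eqn_leq; apply/andP; split.
- apply/bigmax_leqP => k hk. by rewrite -(leq_pmul2l (ltn0Sn 0)) ; nia.
- have hd : (d < (d * d).+1)%N by nia.
  exact: (@leq_bigmax_cond _ (fun k : 'I_(d * d).+1 => (k * k <= d * d)%N) (fun k : 'I_(d * d).+1 => nat_of_ord k) (Ordinal hd)).
Qed.

Lemma even_log_sq D : (0 < D)%N -> (forall q, prime q -> ~~ odd (logn q D)) ->
  exists d, D = (d * d)%N.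
Proof.
move=> hD he.
exists (\prod_(q <- primes D) q ^ (logn q D)./2)%N.
rewrite -big_split /=.
rewrite {1}(prod_prime_decomp hD) prime_decompE big_map /=.
apply: eq_big_seq => q; rewrite mem_primes => /and3P [pq _ _].
rewrite -expnD addnn.
have := odd_double_half (logn q D); rewrite (negbTE (he q pq)) add0n => ->.
done.
Qed.

Lemma den_sq E x y : Cq E x y = 0 -> exists d, `|denq x|%N = (d * d)%N.
Proof.
move=> hC; apply: even_log_sq; first by rewrite absz_gt0 denq_eq0.
move=> q pq.
case: (eqVneq x 0) => [->|x0]; first by rewrite /= logn1.
case: (ltP (vq q x) 0) => hv.
- have [k [k0 vx _ _]] := curve_val1 pq hC x0 hv.
  have := lden_neg pq hv; rewrite vx => e.
  have -> : logn q `|denq x| = (`|k|.*2)%N by lia.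
  by rewrite odd_double.
- by rewrite lden_pos.
Qed.

Lemma dpt_sq E x y : Cq E x y = 0 ->
  (dpt (Some (x, y)) * dpt (Some (x, y)))%N = `|denq x|%N /\ (0 < dpt (Some (x, y)))%N.
Proof.
move=> hC; have [d hd] := den_sq hC.
rewrite /= hd isqrt_sq; split=> //.
have : (0 < `|denq x|)%N by rewrite absz_gt0 denq_eq0.
rewrite hd; nia.
Qed.

Definition N1 E x y : rat :=
  Fx E x y ^+ 2 - cq (a1 E) * Fx E x y * Fy E x y - (cq (a2 E) + 2 * x) * Fy E x y ^+ 2.

Definition Nphi_rest E x : rat :=
  let A1 := cq (a1 E) in let A2 := cq (a2 E) in let A3 := cq (a3 E) in
  let A4 := cq (a4 E) in let A6 := cq (a6 E) in
  let b4 := 2 * A4 + A1 * A3 in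
  let b6 := A3 ^+ 2 + 4 * A6 in
  let b8 := A1 ^+ 2 * A6 + 4 * A2 * A6 - A1 * A3 * A4 + A2 * A3 ^+ 2 - A4 ^+ 2 in
  - (b4 * x ^+ 2) - 2 * b6 * x - b8.

Lemma N1_phi E x y : N1 E x y = x ^+ 4 + Nphi_rest E x
   - (cq (a1 E) ^+ 2 + 4 * cq (a2 E) + 8 * x) * Cq E x y.
Proof. rewrite /N1 /Nphi_rest /Cq /Fx /Fy /=; ring. Qed.

Lemma double_pt E x y : Fy E x y != 0 ->
  exists Y, addpt E (Some (x, y)) (Some (x, y)) = Some (N1 E x y / Fy E x y ^+ 2, Y).
Proof.
move=> hF.
have hc : (y + y + cq (a1 E) * x + cq (a3 E) == 0) = false.
  apply/negbTE; move: hF; rewrite /Fy; congr (_ != _); ring.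
rewrite /= eqxx hc /=; eexists; congr (Some (_, _)).
move: hF; rewrite /N1 /Fy /Fx => hF; field; done.
Qed.


Lemma vF_A p E x y k : prime p -> 0 <= k -> vge p x (-2 * k) -> vge p y (-3 * k) ->
  vge p (Fy E x y) (-3 * k).
Proof. move=> pp k0 hx hy; rewrite /Fy; vsolve; lia. Qed.

Lemma rest_A p E x k : prime p -> 0 < k -> vge p x (-2 * k) ->
  vge p (Nphi_rest E x) (-8 * k + 1).
Proof. move=> pp k0 hx; rewrite /Nphi_rest /=; vsolve; lia. Qed.

Lemma FB p E x y : prime p -> vge p x 0 -> vge p y 0 ->
  vge p (Fy E x y) 0 /\ vge p (Fx E x y) 0.
Proof. move=> pp hx hy; rewrite /Fy /Fx; split; vsolve; lia. Qed.

Lemma N1B p E x y kG kF k : prime p -> vge p x 0 -> vge p (Fx E x y) kG -> vge p (Fy E x y) kF ->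
  0 <= kF -> k <= 2 * kG -> k <= kG + kF -> k <= 2 * kF -> vge p (N1 E x y) k.
Proof. move=> pp hx hG hF h1 h2 h3 h4; rewrite /N1; vsolve; lia. Qed.

Lemma N1B_rest p E x y : prime p -> vge p x 0 -> vge p (Fx E x y) 0 -> vge p (Fy E x y) 1 ->
  vge p (- (cq (a1 E) * Fx E x y * Fy E x y) - (cq (a2 E) + 2 * x) * Fy E x y ^+ 2) 1.
Proof. move=> pp hx hG hF; vsolve; lia. Qed.

Ltac ilia := repeat match goal with
  | H := _ |- _ => clearbody H
  | H : ?T |- _ => lazymatch T with
      | is_true (@Order.le _ _ _ _) => fail
      | is_true (@Order.lt _ _ _ _) => fail
      | @eq int _ _ => fail
      | _ => clear H end
  end; lia.

Lemma part1 p E x y : prime p -> Cq E x y = 0 -> Fy E x y != 0 ->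
  in_E0p E p (Some (x, y)) = p_unit p (u2 E (Some (x, y))).
Proof.
move=> pp hC hF.
have [Y e2] := double_pt hF.
have hP : on_curve E (Some (x, y)) by rewrite onE hC.
have hC2 : Cq E (N1 E x y / Fy E x y ^+ 2) Y = 0.
  by have := on_add hP hP; rewrite e2 onE => /eqP.
have [sq1 pos1] := dpt_sq hC.
have [sq2 pos2] := dpt_sq hC2.
rewrite /u2 e2 /=.
rewrite /= in sq1 pos1 sq2 pos2.
set x2 := N1 E x y / Fy E x y ^+ 2 in hC2 sq2 pos2 *.
set d := isqrt `|denq x| in sq1 pos1 *.
set d2 := isqrt `|denq x2| in sq2 pos2 *.
set F := Fy E x y in hF *.
have d0 : (d%:R : rat) != 0 by rewrite pnatr_eq0 -lt0n.
have d20 : (d2%:R : rat) != 0 by rewrite pnatr_eq0 -lt0n.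
have u0 : d%:R ^+ 4 * F / d2%:R != 0.
  apply: mulf_neq0; [apply: mulf_neq0 => //; exact: expf_neq0 | by rewrite invr_eq0].
have l1 : (logn p `|denq x|)%:Z = 2 * (logn p d)%:Z.
  by rewrite -sq1 lognM // ; ilia.
have l2 : (logn p `|denq x2|)%:Z = 2 * (logn p d2)%:Z.
  by rewrite -sq2 lognM // ; ilia.
have vu : 2 * vq p (d%:R ^+ 4 * F / d2%:R) =
    4 * (logn p `|denq x|)%:Z + 2 * vq p F - (logn p `|denq x2|)%:Z.
  rewrite vq_div ?mulf_neq0 ?expf_neq0 // vqM ?expf_neq0 // vqX // !vq_nat l1 l2; ilia.
rewrite (p_unit_vq _ pp) u0 /=.
rewrite /in_E0p !p_integral_vge //.
set G := Fx E x y.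
have hN : x2 * F ^+ 2 = N1 E x y by rewrite /x2 /F divfK // expf_neq0.
case hx0 : (vge p x 0); last first.
-
  have x0 : x != 0 by apply: contraFneq hx0 => ->; exact: vge0.
  have vx : vq p x < 0 by move: hx0; rewrite vgeP // => /negbT; rewrite -ltNge.
  have [k [k0 ex ey y0]] := curve_val1 pp hC x0 vx.
  have hx : vge p x (-2 * k) by rewrite vgeP // ex.
  have hy : vge p y (-3 * k) by rewrite vgeP // ey.
  have hFk : -3 * k <= vq p F by move: (vF_A E pp (ltW k0) hx hy); rewrite vgeP.
  have x4 : x ^+ 4 != 0 by rewrite expf_neq0.
  have [hN0 vN] : x ^+ 4 + Nphi_rest E x != 0 /\ vq p (x ^+ 4 + Nphi_rest E x) = vq p (x ^+ 4).
    apply: dominant => //; rewrite vqX // ex.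
    apply: vge_weak (rest_A E pp k0 hx); ilia.
  rewrite N1_phi hC mulr0 subr0 in hN.
  rewrite vqX // ex in vN.
  have x20 : x2 != 0.
    by apply: contraNneq hN0 => e; rewrite -hN e mul0r.
  have vx2 : vq p x2 = -8 * k - 2 * vq p F.
    have := congr1 (vq p) hN; rewrite vqM ?expf_neq0 // vqX // vN; ilia.
  have l2' := lden_neg pp (_ : vq p x2 < 0).
  rewrite vx2 in l2'.
  have l1' := lden_neg pp vx; rewrite ex in l1'.
  rewrite /=; apply/esym/eqP.
  have : 2 * vq p (d%:R ^+ 4 * F / d2%:R) = 0.
    rewrite vu l1' l2' //; ilia.
  ilia.
-
  have hy0 := curve_val2 pp hC hx0.
  have [hF0 hG0] := FB E pp hx0 hy0; rewrite -/F -/G in hF0 hG0.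
  rewrite hy0 /= !p_zero_vge //.
  have l1' : logn p `|denq x| = 0%N.
    case: (eqVneq x 0) => [->|x0]; first by rewrite /= logn1.
    by apply: lden_pos => //; move: hx0; rewrite vgeP.
  rewrite l1' in vu.
  have vF0 : 0 <= vq p F by move: hF0; rewrite vgeP.
  case hF1 : (vge p F 1); last first.
  +
    have vF : vq p F = 0 by move: hF1; rewrite vgeP //; ilia.
    rewrite andbF /=; apply/esym/eqP.
    have hNv : vge p (N1 E x y) 0 by apply: (N1B pp hx0 hG0 hF0); ilia.
    have l2' : logn p `|denq x2| = 0%N.
      case: (eqVneq x2 0) => [->|x20]; first by rewrite /= logn1.
      apply: lden_pos => //.
      have N0 : N1 E x y != 0 by rewrite -hN mulf_neq0 // expf_neq0.
      have := congr1 (vq p) hN; rewrite vqM ?expf_neq0 // vqX // vF.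
      move: hNv; rewrite vgeP //; ilia.
    have : 2 * vq p (d%:R ^+ 4 * F / d2%:R) = 0 by rewrite vu l2' vF; ilia.
    ilia.
  + rewrite andbT.
    have vF1 : 1 <= vq p F by move: hF1; rewrite vgeP.
    case hG1 : (vge p G 1) => /=.
    *
      apply/esym/negbTE.
      have hNv : vge p (N1 E x y) 1 by apply: (N1B pp hx0 hG1 hF1); ilia.
      have : 0 < 2 * vq p (d%:R ^+ 4 * F / d2%:R).
        rewrite vu.
        case: (eqVneq x2 0) => [e|x20].
          rewrite e /= logn1; ilia.
        have N0 : N1 E x y != 0 by rewrite -hN mulf_neq0 // expf_neq0.
        have e := congr1 (vq p) hN; rewrite vqM ?expf_neq0 // vqX // in e.
        move: hNv; rewrite vgeP // => hNv.
        case: (ltP (vq p x2) 0) => hv.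
        - have := lden_neg pp hv; ilia.
        - rewrite lden_pos //; ilia.
      ilia.
    *
      apply/esym/eqP.
      have G0 : G != 0 by apply: contraFneq hG1 => ->; exact: vge0.
      have vG : vq p G = 0.
        move: hG1 hG0; rewrite !vgeP // => /negbT; rewrite -ltNge => h1 h2; ilia.
      have G2 : G ^+ 2 != 0 by rewrite expf_neq0.
      have [hN0 vN] : G ^+ 2 + (- (cq (a1 E) * G * F) - (cq (a2 E) + 2 * x) * F ^+ 2) != 0 /\
          vq p (G ^+ 2 + (- (cq (a1 E) * G * F) - (cq (a2 E) + 2 * x) * F ^+ 2)) = vq p (G ^+ 2).
        apply: dominant => //; rewrite vqX // vG.
        exact: (N1B_rest pp hx0 hG0 hF1).
      have eN : N1 E x y = G ^+ 2 + (- (cq (a1 E) * G * F) - (cq (a2 E) + 2 * x) * F ^+ 2).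
        by rewrite /N1 -/G -/F; ring.
      rewrite -eN vqX // vG in vN. rewrite -eN in hN0.
      have x20 : x2 != 0 by apply: contraNneq hN0 => e; rewrite -hN e mul0r.
      have vx2 : vq p x2 = - 2 * vq p F.
        have := congr1 (vq p) hN; rewrite vqM ?expf_neq0 // vqX // vN; ilia.
      have hv : vq p x2 < 0 by ilia.
      have l2' := lden_neg pp hv.
      have : 2 * vq p (d%:R ^+ 4 * F / d2%:R) = 0 by rewrite vu l2' vx2; ilia.
      ilia.
Qed.

Lemma Fy_of_double E x y : addpt E (Some (x, y)) (Some (x, y)) <> None -> Fy E x y != 0.
Proof.
move=> h; apply/negP => /eqP hF; apply: h.
have e : y + y + cq (a1 E) * x + cq (a3 E) = 0 by rewrite -hF /Fy; ring.
by rewrite /= eqxx e eqxx.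
Qed.

Lemma unit_all (r : rat) : (forall q, prime q -> p_unit q r) <-> `|r| = 1.
Proof.
split.
- move=> h.
  have hn : `|numq r|%N = 1%N.
    case: (posnP `|numq r|%N) => [e|hp].
      by have := h 2%N isT; rewrite /p_unit e dvdn0.
    case: (ltngtP `|numq r|%N 1) => // [|hgt]; first by lia.
    have := h _ (pdiv_prime hgt); rewrite /p_unit pdiv_dvd //.
  have hd : `|denq r|%N = 1%N.
    have hp : (0 < `|denq r|)%N by rewrite absz_gt0 denq_eq0.
    case: (ltngtP `|denq r|%N 1) => // [|hgt]; first by lia.
    have := h _ (pdiv_prime hgt); rewrite /p_unit pdiv_dvd andbF //.
  have hd' : denq r = 1 by rewrite -absz_denq hd.
  rewrite (ratE r) hd' divr1 -intr_norm.
  by rewrite (_ : `|numq r| = 1) //; apply/eqP; rewrite -abszE; apply/eqP; rewrite hn.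
- move=> h q pq.
  have : (`|r| == 1) by rewrite h.
  rewrite eqr_norml ler01 andbT => /orP [] /eqP ->; rewrite /p_unit /=;
    by rewrite dvdn1; case: q pq => [|[|]].
Qed.

Lemma least_pos_iff (P Q : nat -> Prop) m :
  (forall n, (0 < n)%N -> (P n <-> Q n)) -> (least_pos P m <-> least_pos Q m).
Proof.
move=> h; rewrite /least_pos; split.
- move=> [m0 [Pm hm]]; split=> //; split; first by apply/h.
  by move=> n n0 Qn; apply: hm => //; apply/h.
- move=> [m0 [Qm hm]]; split=> //; split; first by apply/h.
  by move=> n n0 Pn; apply: hm => //; apply/h.
Qed.

Unset Implicit Arguments.

Theorem proposition1p8 (p : nat) (E : wcurve) (P : point) :
  prime p -> disc E != 0 -> on_curve E P -> P <> None ->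
  (addpt E P P <> None -> (in_E0p E p P <-> p_unit p (u2 E P))) /\
  ((forall n : nat, (0 < n)%N -> mulpt E n P <> None) ->
   forall m : nat,
     least_pos (fun n => in_E0 E (mulpt E n P)) m <->
     least_pos (fun n => `|u2 E (mulpt E n P)| = 1) m).
Proof.
move=> pp hd hP hP0.
have hN := NS_of_disc hd.
split.
- case: P hP hP0 => [[x y]|] // hP _ h2.
  have hC : Cq E x y = 0 by apply/eqP; rewrite -onE.
  by rewrite part1 //; apply: Fy_of_double.
- move=> hT m; apply: least_pos_iff => n n0.
  have hQ := on_mul n hP.
  have hQ0 := hT n n0.
  have h2 := double_ne hN hP hT n0.
  move: hQ hQ0 h2; case: (mulpt E n P) => [[x y]|] // hQ _ h2.
  have hC : Cq E x y = 0 by apply/eqP; rewrite -onE.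
  have hF := Fy_of_double h2.
  rewrite -unit_all /in_E0; split.
  + by move=> h q pq; rewrite -part1 //; apply: h.
  + by move=> h q pq; rewrite part1 //; apply: h.
Qed.
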